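(* Let $P$ be a program and $G$ an execution graph with $\mathrm{cons}^P(G)$ and $\mathit{BE}(G)$, and let $T$ be a thread and $q$ an iteration index with $\mathit{fail}_G^T(q)$. Then $\mathrm{cons}^P(G-(T,q))$.
   Context: Programs. There are finite sets $\mathit{Register}$, $\mathit{Value}$, $\mathit{Location}$; $\mathit{State}=\mathit{Register}\to\mathit{Value}$; an update is a partial map $\mathit{Register}\rightharpoonup\mathit{Value}$, and $(\sigma\ll\mu)(r)=\mu(r)$ if $r\in\mathrm{Dom}(\mu)$, else $\sigma(r)$. Events are reads $R^m(x)$, writes $W^m(x,v)$, fences $F^m$, error $E$. A program $P$ consists of a finite set $\mathcal T$ of threads, each $T$ with a finite statement sequence $P_T(0),\dots,P_T(|P_T|-1)$. A statement is $\mathtt{step}(\epsilon,\delta)$ with $\epsilon:\mathit{State}\to\mathit{Event}$, $\delta:\mathit{State}\times(\mathit{Value}\cup\{\bot\})\to\mathit{Update}$, or $\mathtt{await}(n,\kappa)$ with $n\in\mathbb N$, $\kappa:\mathit{State}\to\{0,1\}$. Syntactic restriction: if $P_T(k)=\mathtt{await}(n,\cdot)$ then $n\le k$ and no $P_T(k')$ with $k'\in[k-n:k)$ is an await. ($[a:b)=\{a,\dots,b-1\}$.) An execution graph $G$ has a set $G.\mathrm E$ of triples $\langle T,t,e\rangle$ and a partial reads-from map $G.\mathrm{rf}$ from reads to writes. Thread-local semantics: $k_G^T(0)=0$, $\sigma_G^T(0)$ fixed; if $k_G^T(t)\ge|P_T|$ or no triple $\langle T,t,\cdot\rangle$ is in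 $G.\mathrm E$, execution stops ($N_G^T=t$). Otherwise with $S=P_T(k_G^T(t))$: $e_G^T(t)=\epsilon(\sigma_G^T(t))$ for $S=\mathtt{step}(\epsilon,\cdot)$, $F^{\mathrm{rlx}}$ for an await; $v_G^T(t)$ is the value of the write that $G.\mathrm{rf}$ assigns to $\langle T,t,e_G^T(t)\rangle$ if this is a read with defined rf, else $\bot$. For a step: $k_G^T(t+1)=k_G^T(t)+1$; if $e_G^T(t)$ is a read with $v_G^T(t)=\bot$ then $N_G^T=t+1$, $\sigma_G^T(t+1)=\sigma_G^T(t)$, else $\sigma_G^T(t+1)=\sigma_G^T(t)\ll\delta(\sigma_G^T(t),v_G^T(t))$. For $\mathtt{await}(n,\kappa)$: $\sigma_G^T(t+1)=\sigma_G^T(t)$ and $k_G^T(t+1)=k_G^T(t)+1$ if $\kappa(\sigma_G^T(t))=0$, else $k_G^T(t)-n$. $\mathrm{cons}^P(G)$ holds iff $G.\mathrm E=\{\langle T,t,e_G^T(t)\rangle\mid T\in\mathcal T,\ t<N_G^T\}$. Awaits: $\mathit{end}_G^T(0)<\mathit{end}_G^T(1)<\cdots$ enumerate the steps $t$ at which $P_T(k_G^T(t))$ is an await; $\mathit{len}_G^T(q)=n$ where $P_T(k_G^T(\mathit{end}_G^T(q)))=\mathtt{await}(n,\kappa)$; $\mathit{start}_G^T(q)=\mathit{end}_G^T(q)-\mathit{len}_G^T(q)$; $\mathit{fail}_G^T(q)$ iff $\kappa(\sigma_G^T(\mathit{end}_G^T(q)))=1$. Bounded effect. $\delta_G^T(t)=\delta(\sigma_G^T(t),v_G^T(t))$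 if $P_T(k_G^T(t))=\mathtt{step}(\cdot,\delta)$ and not ($e_G^T(t)$ is a read and $v_G^T(t)=\bot$); otherwise the empty update. $\mathit{vis}_G^T(t,u)=\mathrm{Dom}(\delta_G^T(t))\setminus\bigcup_{t<u'<u}\mathrm{Dom}(\delta_G^T(u'))$. $F(\mathtt{step}(\epsilon,\delta))=\{\epsilon,\delta\}$, $F(\mathtt{await}(n,\kappa))=\{\kappa\}$. A function $f$ depends on $R\subseteq\mathit{Register}$ iff there are states $\sigma,\sigma'$ agreeing outside $R$ with $f(\sigma)\neq f(\sigma')$ (for $f=\delta$: $\delta(\sigma,v)\neq\delta(\sigma',v)$ for some $v$). Step $t$ of $T$ register-reads-from to step $u$ ($t\to_{\mathrm{rrf}}u$) iff $u\ge t$ and some $f\in F(P_T(k_G^T(u)))$ depends on $\mathit{vis}_G^T(t,u)$. $\mathit{BE}(G)$ holds iff for all $T$, all $q$ with $\mathit{fail}_G^T(q)$ and all $t\in[\mathit{start}_G^T(q):\mathit{end}_G^T(q))$: $e_G^T(t)$ is not a write, and $t\to_{\mathrm{rrf}}u$ implies $u\in[\mathit{start}_G^T(q):\mathit{end}_G^T(q))$. Deletion. For a failed iteration $q$ of $T$, $G-(T,q)$ is the graph obtained by the partial renaming $r$: $r(\langle U,t,e\rangle)=\langle U,t,e\rangle$ if $U\neq T$ or $t<\mathit{start}_G^T(q)$; $r(\langle T,t,e\rangle)=\langle T,t-(\mathit{len}_G^T(q)+1),e\rangle$ if $t>\mathit{end}_G^T(q)$; undefined (event deleted) otherwise. Then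 $(G-(T,q)).\mathrm E=r(G.\mathrm E)$ and $(G-(T,q)).\mathrm{rf}(e)=r(G.\mathrm{rf}(r^{-1}(e)))$. *)

(* Defs.v *)
From mathcomp Require Import all_boot.
Set Implicit Arguments. Unset Strict Implicit. Unset Printing Implicit Defensive.

Section Model.
Context (Thread Register Location Value : finType) (Mode : Type).

Definition State := Register -> Value.
Definition Update := Register -> option Value.
Definition upd (s : State) (mu : Update) : State :=
  fun r => if mu r is Some v then v else s r.
Definition empty_update : Update := fun _ => None.
Definition in_dom (mu : Update) (r : Register) : bool := isSome (mu r).

Inductive Event :=
| ERead (m : Mode) (x : Location)
| EWrite (m : Mode) (x : Location) (v : Value)
| EFence (m : Mode)
| EError.

Definition is_read (e : Event) : bool := if e is ERead _ _ then true else false.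
Definition is_write (e : Event) : bool := if e is EWrite _ _ _ then true else false.
Definition write_val (e : Event) : option Value :=
  if e is EWrite _ _ v then Some v else None.

(* delta takes a value or bottom (None) *)
Inductive Stmt :=
| Step (eps : State -> Event) (delta : State -> option Value -> Update)
| Await (n : nat) (kappa : State -> bool).

Definition is_await (s : Stmt) : bool := if s is Await _ _ then true else false.

(* default statement, only used outside the code (never reached for k < size) *)
Definition dflt_stmt : Stmt := Step (fun _ => EError) (fun _ _ => empty_update).

Record Program := { code : Thread -> seq Stmt; init : Thread -> State }.

Definition stmt_at (P : Program) (T : Thread) (k : nat) : Stmt :=
  nth dflt_stmt (code P T) k.

Definition wf_program (P : Program) : Prop :=
  forall T k n kappa, k < size (code P T) ->
    stmt_at P T k = Await n kappa ->
    n <= k /\ (forall k', k - n <= k' < k -> ~~ is_await (stmt_at P T k')).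

Definition Triple := (Thread * nat * Event)%type.

Record Graph := { gE : Triple -> Prop; grf : Triple -> option Triple }.

Definition wf_graph (G : Graph) : Prop :=
  forall a b, grf G a = Some b ->
    gE G a /\ gE G b /\ is_read a.2 /\ is_write b.2.

Section Semantics.
Context (rlx : Mode) (P : Program) (G : Graph) (T : Thread).

Definition vof (x : Triple) : option Value :=
  if grf G x is Some w then write_val w.2 else None.

Definition ev_of (k : nat) (s : State) : Event :=
  match stmt_at P T k with
  | Step eps _ => eps s
  | Await _ _ => EFence rlx
  end.

Fixpoint conf (t : nat) : nat * State :=
  match t with
  | 0 => (0, init P T)
  | t'.+1 =>
    let (k, s) := conf t' in
    match stmt_at P T k with
    | Step eps delta =>
        let e := eps s in
        let v := vof (T, t', e) in
        (k.+1, if is_read e && ~~ isSome v then s else upd s (delta s v))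
    | Await n kappa => (if kappa s then k - n else k.+1, s)
    end
  end.

Definition kk (t : nat) : nat := (conf t).1.
Definition sg (t : nat) : State := (conf t).2.
Definition stmt_t (t : nat) : Stmt := stmt_at P T (kk t).
Definition ev (t : nat) : Event := ev_of (kk t) (sg t).
Definition vv (t : nat) : option Value := vof (T, t, ev t).
Definition readbot (t : nat) : bool := is_read (ev t) && ~~ isSome (vv t).

(* t < N_G^T  (N_G^T may be infinite) *)
Definition lt_N (t : nat) : Prop :=
  (forall t', t' <= t -> kk t' < size (code P T) /\ exists e, gE G (T, t', e))
  /\ (forall t', t' < t -> ~~ readbot t').

Definition delta_at (t : nat) : Update :=
  match stmt_t t with
  | Step _ d => if readbot t then empty_update else d (sg t) (vv t)
  | Await _ _ => empty_update
  end.

Definition vis (t u : nat) (r : Register) : bool :=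
  in_dom (delta_at t) r &&
  all (fun u' => ~~ in_dom (delta_at u') r) (iota t.+1 (u - t.+1)).

Definition depends {X : Type} (R : Register -> bool) (f : State -> X) : Prop :=
  exists s s' : State, (forall r, ~~ R r -> s r = s' r) /\ f s <> f s'.

Definition depF (S : Stmt) (R : Register -> bool) : Prop :=
  match S with
  | Step eps delta => depends R eps \/ exists v, depends R (fun s => delta s v)
  | Await _ kappa => depends R kappa
  end.

Definition rrf (t u : nat) : Prop := t <= u /\ depF (stmt_t u) (vis t u).

Definition is_end (q t : nat) : Prop :=
  lt_N t /\ is_await (stmt_t t) /\
  count (fun t' => is_await (stmt_t t')) (iota 0 t) = q.

Definition alen (t : nat) : nat := if stmt_t t is Await n _ then n else 0.
Definition akappa (t : nat) : bool :=
  if stmt_t t is Await _ kappa then kappa (sg t) else false.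

Definition fail_end (q t : nat) : Prop := is_end q t /\ akappa t.

End Semantics.

Definition cons (rlx : Mode) (P : Program) (G : Graph) : Prop :=
  forall x, gE G x <-> exists T t, lt_N rlx P G T t /\ x = (T, t, ev rlx P G T t).

Definition BE (rlx : Mode) (P : Program) (G : Graph) : Prop :=
  forall T q tend, fail_end rlx P G T q tend ->
  forall t, tend - alen P G T tend <= t < tend ->
    ~~ is_write (ev rlx P G T t) /\
    (forall u, lt_N rlx P G T u -> rrf rlx P G T t u ->
        tend - alen P G T tend <= u < tend).

(* deletion, given thread T, start s and length l (so end = s + l) *)
Definition ren (T : Thread) (s l : nat) (x : Triple) : option Triple :=
  let: (U, t, e) := x in
  if (U != T) || (t < s) then Some x
  else if s + l < t then Some (U, t - l.+1, e) else None.

Definition ren_inv (T : Thread) (s l : nat) (x : Triple) : Triple :=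
  let: (U, t, e) := x in
  if (U != T) || (t < s) then x else (U, t + l.+1, e).

Definition del (G : Graph) (T : Thread) (s l : nat) : Graph :=
  {| gE := fun x => exists y, gE G y /\ ren T s l y = Some x;
     grf := fun x => obind (ren T s l) (grf G (ren_inv T s l x)) |}.

End Model.

(* Main.v *)
Require Import Defs.
From mathcomp Require Import all_boot zify.
From Stdlib Require Import Classical FunctionalExtensionality.
Set Implicit Arguments. Unset Strict Implicit. Unset Printing Implicit Defensive.

Section Gen.
Context (Thread Register Location Value : finType) (Mode : Type) (rlx : Mode)
  (P : Program Thread Register Location Value Mode)
  (G : Graph Thread Location Value Mode) (T : Thread).

Lemma kk_succ t : kk P G T t.+1 =
  match stmt_t P G T t with
  | Step _ _ => (kk P G T t).+1
  | Await n kappa => if kappa (sg P G T t) then kk P G T t - n else (kk P G T t).+1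
  end.
Proof.
rewrite /stmt_t /kk /sg /=; case: (conf P G T t) => k s /=.
by case: (stmt_at P T k).
Qed.

Lemma sg_succ t : sg P G T t.+1 = upd (sg P G T t) (delta_at rlx P G T t).
Proof.
rewrite /delta_at /readbot /vv /ev /ev_of /stmt_t /kk /sg /=; case: (conf P G T t) => k s /=.
by case: (stmt_at P T k) => //= eps d; case: ifP.
Qed.

Lemma kk_le t : kk P G T t <= t.
Proof.
elim: t => [//|t IH]; rewrite kk_succ; case: (stmt_t P G T t) => [? ?|n k]; try case: (k _); 
  by rewrite ?ltnS // (leq_trans (leq_subr _ _)) // ltnW.
Qed.

Lemma vis_succ t u r : t < u -> vis rlx P G T t u.+1 r = vis rlx P G T t u r && ~~ in_dom (delta_at rlx P G T u) r.
Proof.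
move=> tu; rewrite /vis subSn // -[(u - t.+1).+1]addn1 iotaD all_cat /= andbT andbA subnKC //.

Qed.

Lemma vis_self t r : vis rlx P G T t t.+1 r = in_dom (delta_at rlx P G T t) r.
Proof. by rewrite /vis subnn /= andbT. Qed.

End Gen.

Section Gen2.
Context (Thread Register Location Value : finType) (Mode : Type) (rlx : Mode)
  (P : Program Thread Register Location Value Mode)
  (G : Graph Thread Location Value Mode) (T : Thread).

Lemma lt_N_le t t' : lt_N rlx P G T t -> t' <= t -> lt_N rlx P G T t'.
Proof.
move=> [H1 H2] le; split=> t'' le''.
  by apply: H1; apply: leq_trans le''  le.
by apply: H2; apply: leq_trans le'' le.
Qed.

Lemma lt_N_succ t : lt_N rlx P G T t.+1 <->
  lt_N rlx P G T t /\ ~~ readbot rlx P G T t /\ kk P G T t.+1 < size (code P T) /\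
  exists e, gE G (T, t.+1, e).
Proof.
split.
  move=> H; have H' := lt_N_le H (leqnSn t); split=> //.
  case: H => H1 H2; split; first exact: H2.
  exact: H1.
move=> [[H1 H2] [nr [ks ex]]]; split=> t'.
  rewrite leq_eqVlt; case/orP=> [/eqP->//|]; rewrite ltnS; exact: H1.
rewrite ltnS leq_eqVlt; case/orP=> [/eqP->//|]; exact: H2.
Qed.

Lemma lt_N_0 : lt_N rlx P G T 0 <-> kk P G T 0 < size (code P T) /\ exists e, gE G (T, 0, e).
Proof.
split; first by case=> H1 _; exact: H1.
by move=> H; split=> t'; rewrite ?leqn0 => // /eqP->.
Qed.

End Gen2.

Lemma nodep (Register Value : finType) (X : Type) (R : Register -> bool) (f : State Register Value -> X) :
  ~ depends R f -> forall s s', (forall r, ~~ R r -> s r = s' r) -> f s = f s'.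
Proof.
move=> nd s s' H; apply: NNPP => ne; apply: nd; by exists s, s'.
Qed.

Lemma nodep_has (Register Value : finType) (X : Type) (V : nat -> Register -> bool) (L : seq nat)
  (f : State Register Value -> X) :
  (forall t, t \in L -> ~ depends (V t) f) ->
  forall s s', (forall r, ~~ has (fun t => V t r) L -> s r = s' r) -> f s = f s'.
Proof.
elim: L => [|a L IH] H s s' E.
  by congr f; apply: functional_extensionality => r; apply: E.
pose tau := fun r => if V a r then s' r else s r.
have -> : f s = f tau.
  apply: (nodep (H a (mem_head _ _))) => r nr; by rewrite /tau (negbTE nr).
apply: IH => [t tL|r nr]; first by apply: H; rewrite in_cons tL orbT.
rewrite /tau; case: ifP => // nv; apply: E; by rewrite /= nv.
Qed.

Lemma ltN_top (Thread Register Location Value : finType) (Mode : Type) (rlx : Mode)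
  (P : Program Thread Register Location Value Mode)
  (G : Graph Thread Location Value Mode) (T : Thread) t :
  (forall t', t' < t -> kk P G T t' < size (code P T) /\ exists e, gE G (T, t', e)) ->
  (forall t', t' < t -> ~~ readbot rlx P G T t') ->
  (lt_N rlx P G T t <-> kk P G T t < size (code P T) /\ exists e, gE G (T, t, e)).
Proof.
move=> H1 H2; split; first by case=> H _; exact: H.
move=> H; split=> // t'; rewrite leq_eqVlt; case/orP=> [/eqP->//|]; exact: H1.
Qed.

Section Main.
Context (Thread Register Location Value : finType) (Mode : Type) (rlx : Mode)
  (P : Program Thread Register Location Value Mode)
  (G : Graph Thread Location Value Mode)
  (wfP : wf_program P) (wfG : wf_graph G) (consG : cons rlx P G) (BEG : BE rlx P G)
  (T : Thread) (q tend : nat) (FE : fail_end rlx P G T q tend).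

Let l := alen P G T tend.
Let s := tend - l.
Let G' := del G T s l.

Lemma FE_ltN : lt_N rlx P G T tend.
Proof. by case: FE => [[]]. Qed.

Lemma FE_stmt : exists kappa, stmt_t P G T tend = Await _ _ l kappa /\ kappa (sg P G T tend).
Proof.
case: FE => [[_ [aw _]] ak]; move: aw ak; rewrite /l /alen /akappa.
case: (stmt_t P G T tend) => // n kap _ ak; by exists kap.
Qed.

Lemma l_le : l <= kk P G T tend.
Proof.
have [kap [E _]] := FE_stmt.
have [H1 _] := FE_ltN.
have [ks _] := H1 tend (leqnn _).
by have [] := wfP ks E.
Qed.

Lemma sl : s + l = tend.
Proof. rewrite /s subnK //; apply: leq_trans l_le (kk_le _ _ _ _). Qed.

Lemma ev_tend : ev rlx P G T tend = EFence _ _ rlx.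
Proof.
have [kap [E _]] := FE_stmt; move: E; rewrite /ev /ev_of /stmt_t.
by case: (stmt_at P T (kk P G T tend)) => // n k [_ _].
Qed.

Lemma vof_del x : vof G' x = vof G (ren_inv T s l x).
Proof.
rewrite /vof /G' /del /=.
case E: (grf G (ren_inv T s l x)) => [w|] //=.
have [_ [gw [_ ww]]] := wfG E.
have [U [t [ltN ew]]] := (consG w).1 gw.
subst w; rewrite /ren.
case: ifP => //= /norP [/negPn /eqP UT]; rewrite -leqNgt => st.
case: ifP => //= lt; exfalso; subst U.
move/negbT: lt; rewrite -leqNgt => lt; have slt := sl.
rewrite slt leq_eqVlt in lt; case/orP: lt => [/eqP tt|tt].
  by move: ww; rewrite /= tt ev_tend.
have := (BEG FE (t:=t)); rewrite -/l -/s st tt => /(_ isT) [nw _].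
by rewrite /= (negbTE nw) in ww.
Qed.


Lemma prefix t : t <= s -> conf P G' T t = conf P G T t.
Proof.
elim: t => [//|t IH] le /=.
rewrite IH ?(ltnW le) //; case: (conf P G T t) => k sg0.
case: (stmt_at P T k) => // eps d.
by rewrite vof_del /ren_inv eqxx /= le.
Qed.

Lemma other U t : U != T -> conf P G' U t = conf P G U t.
Proof.
move=> UT; elim: t => [//|t IH] /=.
rewrite IH; case: (conf P G U t) => k sg0.
case: (stmt_at P U k) => // eps d.
by rewrite vof_del /ren_inv UT.
Qed.

Lemma K_stmt : exists kappa, stmt_at P T (kk P G T tend) = Await _ _ l kappa /\ kappa (sg P G T tend).
Proof. exact: FE_stmt. Qed.

Lemma back j : j <= l -> kk P G T (tend - j) = kk P G T tend - j.
Proof.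
have [kap0 [EK _]] := K_stmt.
have lK := l_le.
have [_ noK] := @wfP T (kk P G T tend) _ _ ((FE_ltN.1 tend (leqnn _)).1) EK.
have ltend : l <= tend by apply: leq_trans lK (kk_le _ _ _ _).
elim: j => [|j IH] jl; first by rewrite !subn0.
have jl' : j <= l by apply: ltnW.
have Et : tend - j = (tend - j.+1).+1 by lia.
move: (IH jl'); rewrite Et kk_succ /stmt_t.
set t := tend - j.+1.
have pl : kk P G T t < size (code P T) by apply: ((FE_ltN.1 t _).1); rewrite /t leq_subr.
have wfp n kap := @wfP T (kk P G T t) n kap pl.
case Ep: (stmt_at P T (kk P G T t)) => [eps d|n kap].
  move=> H; lia.
have [np nop] := wfp _ _ Ep.
case: (kap _) => H.
- case: (ltngtP (kk P G T t) (kk P G T tend)) => c.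
  + have := noK (kk P G T t); rewrite Ep /=; move=> X; suff F : false by []; apply: X; apply/andP; split; lia.
  + have := nop (kk P G T tend); rewrite EK /=; move=> X; suff F : false by []; apply: X; apply/andP; split; lia.
  + move: Ep; rewrite c EK => -[nl _]; lia.
- have := noK (kk P G T t); rewrite Ep /=; move=> X; suff F : false by []; apply: X; apply/andP; split; lia.
Qed.


Lemma delta_tend r : in_dom (delta_at rlx P G T tend) r = false.
Proof. by rewrite /delta_at; have [k [-> _]] := FE_stmt. Qed.

Lemma kk_jump : kk P G T tend.+1 = kk P G T s.
Proof.
rewrite kk_succ; have [k [-> ->]] := FE_stmt.
by rewrite /s back.
Qed.

Lemma sg_jump : sg P G T tend.+1 = sg P G T tend.
Proof. by rewrite (sg_succ rlx) /delta_at; have [k [-> _]] := FE_stmt. Qed.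

Lemma upd_nin (sg0 : State Register Value) mu r : ~~ in_dom mu r -> upd sg0 mu r = sg0 r.
Proof. by rewrite /upd /in_dom; case: (mu r). Qed.

Lemma upd_in (sg0 sg1 : State Register Value) mu r : in_dom mu r -> upd sg0 mu r = upd sg1 mu r.
Proof. by rewrite /upd /in_dom; case: (mu r). Qed.

Lemma drift i : i <= l -> forall r, sg P G T (s + i) r != sg P G T s r ->
  exists t0, s <= t0 < s + i /\ vis rlx P G T t0 (s + i) r.
Proof.
elim: i => [|i IH] il r; first by rewrite addn0 eqxx.
rewrite addnS (sg_succ rlx).
case D: (in_dom (delta_at rlx P G T (s + i)) r) => ne.
  exists (s + i); rewrite vis_self D; split=> //; lia.
rewrite upd_nin ?D // in ne.
have [t0 [r0 v0]] := IH (ltnW il) r ne.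
exists t0; split; first lia.
by rewrite vis_succ ?D ?v0 //; case/andP: r0.
Qed.

Lemma claim0 : kk P G' T s = kk P G T tend.+1 /\
  forall r, sg P G' T s r != sg P G T tend.+1 r ->
    exists t0, s <= t0 < tend /\ vis rlx P G T t0 tend.+1 r.
Proof.
split; first by rewrite kk_jump /kk prefix.
move=> r; rewrite /sg prefix // -/(sg P G T s) -/(sg P G T tend.+1) sg_jump eq_sym -sl => ne.
have [t0 [r0 v0]] := drift (leqnn _) ne.
exists t0; split=> //.
rewrite vis_succ ?v0 ?sl ?delta_tend //; rewrite -sl; by case/andP: r0.
Qed.


Lemma match_step i :
  kk P G' T (s + i) = kk P G T (tend.+1 + i) ->
  (forall r, sg P G' T (s + i) r != sg P G T (tend.+1 + i) r ->
     exists t0, s <= t0 < tend /\ vis rlx P G T t0 (tend.+1 + i) r) ->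
  lt_N rlx P G T (tend.+1 + i) ->
  [/\ ev rlx P G' T (s + i) = ev rlx P G T (tend.+1 + i),
      readbot rlx P G' T (s + i) = readbot rlx P G T (tend.+1 + i),
      delta_at rlx P G' T (s + i) = delta_at rlx P G T (tend.+1 + i) &
      kk P G' T (s + i).+1 = kk P G T (tend.+1 + i).+1].
Proof.
set u := tend.+1 + i => Hk Hr Hl.
have slt := sl.
have agree : forall r, ~~ has (fun t0 => vis rlx P G T t0 u r) (iota s l) ->
    sg P G' T (s + i) r = sg P G T u r.
  move=> r nh; case: (eqVneq (sg P G' T (s + i) r) (sg P G T u r)) => // ne.
  have [t0 [rt v]] := Hr r ne; move: nh; case/negP; apply/hasP; exists t0 => //.
  rewrite mem_iota; lia.
have ndep : forall t0, t0 \in iota s l -> ~ depF (stmt_t P G T u) (vis rlx P G T t0 u).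
  move=> t0; rewrite mem_iota => rt D.
  have := BEG FE (t:=t0); rewrite -/l -/s => /(_ _) [].
    apply/andP; split; lia.
  move=> _ H; have := H u Hl (conj _ D); rewrite /u.
  move=> X; have : tend - l <= tend.+1 + i < tend by apply: X; lia.
  lia.
have Est : stmt_t P G' T (s + i) = stmt_t P G T u by rewrite /stmt_t Hk.
have eu : s + i + l.+1 = u by rewrite /u; lia.
have vvE : forall e, vof G' (T, s + i, e) = vof G (T, u, e).
  move=> e; rewrite vof_del /ren_inv eqxx /= ltnNge leq_addr /=.
  by rewrite eu.
move: ndep; rewrite /stmt_t.
case Es: (stmt_at P T (kk P G T u)) => [eps d|n kap] /= ndep.
- have eq1 : eps (sg P G' T (s + i)) = eps (sg P G T u).
    apply: (nodep_has (V := fun t0 r => vis rlx P G T t0 u r) (f := eps) _ agree) => t1 H D; apply: (ndep t1 H); left; exact: D.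
  have eq2 : forall v, d (sg P G' T (s + i)) v = d (sg P G T u) v.
    move=> v; apply: (nodep_has (V := fun t0 r => vis rlx P G T t0 u r) (f := fun s0 => d s0 v) _ agree); intros t1 H D.
    apply: (ndep t1 H); right; exists v; exact: D.
  have Eev : ev rlx P G' T (s + i) = ev rlx P G T u by rewrite /ev /ev_of Hk Es eq1.
  have Evv : vv rlx P G' T (s + i) = vv rlx P G T u by rewrite /vv Eev vvE.
  have Erb : readbot rlx P G' T (s + i) = readbot rlx P G T u by rewrite /readbot Eev Evv.
  split=> //.
    by rewrite /delta_at Est /stmt_t Es Erb Evv eq2.
  by rewrite (kk_succ P G' T (s+i)) (kk_succ P G T u) Est /stmt_t Es Hk.
- have eq1 : kap (sg P G' T (s + i)) = kap (sg P G T u).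
    by apply: (nodep_has (V := fun t0 r => vis rlx P G T t0 u r) (f := kap) _ agree) => t1 H D; apply: (ndep t1 H).
  have Eev : ev rlx P G' T (s + i) = ev rlx P G T u by rewrite /ev /ev_of Hk Es.
  split=> //.
    by rewrite /readbot Eev /vv Eev vvE.
    by rewrite /delta_at Est /stmt_t Es.
  by rewrite (kk_succ P G' T (s+i)) (kk_succ P G T u) Est /stmt_t Es Hk eq1.
Qed.


Lemma claim i : (forall j, j < i -> lt_N rlx P G T (tend.+1 + j)) ->
  kk P G' T (s + i) = kk P G T (tend.+1 + i) /\
  forall r, sg P G' T (s + i) r != sg P G T (tend.+1 + i) r ->
    exists t0, s <= t0 < tend /\ vis rlx P G T t0 (tend.+1 + i) r.
Proof.
elim: i => [|i IH] H; first by rewrite !addn0; exact: claim0.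
have [Hk Hr] := IH (fun j lt => H j (ltnW lt)).
have [_ _ dE kkE] := match_step Hk Hr (H i (ltnSn i)).
rewrite !addnS; split=> // r.
rewrite (sg_succ rlx P G' T (s + i)) (sg_succ rlx P G T (tend.+1 + i)) dE.
case D: (in_dom (delta_at rlx P G T (tend.+1 + i)) r).
  by rewrite (upd_in _ (sg P G T (tend.+1 + i)) D) eqxx.
rewrite !upd_nin ?D // => ne.
have [t0 [rt v]] := Hr r ne.
exists t0; split=> //; rewrite vis_succ ?v ?D //; lia.
Qed.

Definition mp t := if t < s then t else t + l.+1.

Lemma gE_del t e : gE G' (T, t, e) <-> gE G (T, mp t, e).
Proof.
rewrite /mp; split.
  move=> [[[U t'] e'] [g]]; rewrite /ren.
  case: (eqVneq U T) => [UT|UT] /=.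
    subst U; case: (ltnP t' s) => ts /=.
      by move=> [<- <-]; rewrite ts.
    case: ifP => // lt [<- <-]; rewrite ifN; last by lia.
    by rewrite subnK //; lia.
  by case=> UT'; rewrite UT' eqxx in UT.
case: ifP => ts g.
  by exists (T, t, e); rewrite /ren eqxx ts.
exists (T, t + l.+1, e); split=> //; rewrite /ren eqxx /=.
rewrite ifN; last by lia.
rewrite ifT; last by lia.
by rewrite addnK.
Qed.


Lemma pre_kk t : t <= s -> kk P G' T t = kk P G T t.
Proof. by move=> ts; rewrite /kk prefix. Qed.

Lemma pre_ev t : t <= s -> ev rlx P G' T t = ev rlx P G T t.
Proof. by move=> ts; rewrite /ev /kk /sg prefix. Qed.

Lemma pre_rb t : t < s -> readbot rlx P G' T t = readbot rlx P G T t.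
Proof.
move=> ts; rewrite /readbot /vv pre_ev ?(ltnW ts) // vof_del /ren_inv eqxx /=.
by rewrite ts.
Qed.

Lemma s_le_tend : s <= tend.
Proof. by rewrite /s leq_subr. Qed.

Lemma pre_ok t : t < s ->
  (kk P G' T t < size (code P T) /\ exists e, gE G' (T, t, e)) /\ ~~ readbot rlx P G' T t.
Proof.
move=> ts; have st := s_le_tend.
have [H1 H2] := FE_ltN.
have [ks [e g]] := H1 t (ltnW (leq_trans ts st)).
split; last by rewrite pre_rb // H2 //; apply: leq_trans ts st.
rewrite pre_kk ?(ltnW ts) //; split=> //; exists e; apply/gE_del; by rewrite /mp ts.
Qed.

Lemma mp_ge t : s <= t -> mp t = t + l.+1.
Proof. by move=> st; rewrite /mp ltnNge st. Qed.

Lemma suf_ltN i : lt_N rlx P G' T (s + i) <-> lt_N rlx P G T (tend.+1 + i).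
Proof.
have slt := sl.
elim: i => [|i IH].
  rewrite !addn0 (ltN_top (t := s)); last 2 first.
  - by move=> t' lt; case: (pre_ok lt).
  - by move=> t' lt; case: (pre_ok lt).
  rewrite (lt_N_succ rlx P G T tend).
  have [Hk _] := claim0.
  split.
    move=> [K [e g]]; split; first exact: FE_ltN.
    split; first by rewrite /readbot ev_tend.
    split; first by rewrite -Hk.
    exists e; move/gE_del: g; rewrite mp_ge //; congr (gE G (T, _, e)); lia.
  move=> [_ [_ [K [e g]]]]; split; first by rewrite Hk.
  exists e; apply/gE_del; rewrite mp_ge //; move: g; congr (gE G (T, _, e)); lia.
rewrite !addnS (lt_N_succ rlx P G' T (s + i)) (lt_N_succ rlx P G T (tend.+1 + i)).
have key : lt_N rlx P G T (tend.+1 + i) ->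
   readbot rlx P G' T (s + i) = readbot rlx P G T (tend.+1 + i) /\
   kk P G' T (s + i).+1 = kk P G T (tend.+1 + i).+1.
  move=> L.
  have Hj : forall j, j < i -> lt_N rlx P G T (tend.+1 + j).
    by move=> j lt; apply: (lt_N_le L); lia.
  have [Hk Hr] := claim Hj.
  by have [_ rb _ kkE] := match_step Hk Hr L.
split.
  move=> [L [R [K [e g]]]]; have L' := IH.1 L; have [rb kkE] := key L'.
  split=> //; split; first by rewrite -rb.
  split; first by rewrite -kkE.
  exists e; move/gE_del: g; rewrite mp_ge; last by lia.
  congr (gE G (T, _, e)); lia.
move=> [L [R [K [e g]]]]; have [rb kkE] := key L.
split; first exact: IH.2.
split; first by rewrite rb.
split; first by rewrite kkE.
exists e; apply/gE_del; rewrite mp_ge; last by lia.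
move: g; congr (gE G (T, _, e)); lia.
Qed.

Lemma suf_ev i : lt_N rlx P G' T (s + i) -> ev rlx P G' T (s + i) = ev rlx P G T (tend.+1 + i).
Proof.
move/suf_ltN => L.
have Hj : forall j, j < i -> lt_N rlx P G T (tend.+1 + j).
  by move=> j lt; apply: (lt_N_le L); lia.
have [Hk Hr] := claim Hj.
by have [] := match_step Hk Hr L.
Qed.

Lemma C2 t : lt_N rlx P G' T t <-> lt_N rlx P G T (mp t).
Proof.
case: (ltnP t s) => ts.
  rewrite /mp ts; split=> _.
    apply: (lt_N_le FE_ltN); apply: leq_trans (ltnW ts) s_le_tend.
  split=> t' le.
    by case: (pre_ok (leq_ltn_trans le ts)).
  by case: (pre_ok (ltn_trans le ts)).
rewrite mp_ge //; have -> : t = s + (t - s) by lia.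
rewrite suf_ltN; have slt := sl.
have -> : s + (t - s) + l.+1 = tend.+1 + (t - s) by lia.
by [].
Qed.

Lemma C3 t : lt_N rlx P G' T t -> ev rlx P G' T t = ev rlx P G T (mp t).
Proof.
case: (ltnP t s) => ts.
  by rewrite /mp ts pre_ev // ltnW.
rewrite mp_ge //; have -> : t = s + (t - s) by lia.
move/suf_ev => ->; have slt := sl.
have -> : s + (t - s) + l.+1 = tend.+1 + (t - s) by lia.
by [].
Qed.


Lemma gE_other U t e : U != T -> gE G' (U, t, e) <-> gE G (U, t, e).
Proof.
move=> UT; split.
  move=> [[[U' t'] e'] [g]]; rewrite /ren.
  case: (eqVneq U' T) => [->|U'T] /=.
    case: ifP => _; first by case=> E; rewrite E eqxx in UT.
    case: ifP => _ //; by case=> E; rewrite E eqxx in UT.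
  by case=> <- <- <-.
by move=> g; exists (U, t, e); rewrite /ren UT.
Qed.

Lemma ev_other U t : U != T -> ev rlx P G' U t = ev rlx P G U t.
Proof. by move=> UT; rewrite /ev /kk /sg other. Qed.

Lemma lt_other U t : U != T -> lt_N rlx P G' U t <-> lt_N rlx P G U t.
Proof.
move=> UT.
have ek : forall t, kk P G' U t = kk P G U t by move=> t'; rewrite /kk other.
have er : forall t, readbot rlx P G' U t = readbot rlx P G U t.
  by move=> t'; rewrite /readbot /vv ev_other // vof_del /ren_inv UT.
rewrite /lt_N; split=> [[H1 H2]|[H1 H2]]; split=> t' le.
- have [k [e g]] := H1 t' le; rewrite ek in k; split=> //; exists e; exact/(gE_other _ _ UT).
- by rewrite -er; apply: H2.
- have [k [e g]] := H1 t' le; split; first by rewrite ek.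
  by exists e; apply/(gE_other _ _ UT).
- by rewrite er; apply: H2.
Qed.

Lemma cons_del : cons rlx P G'.
Proof.
move=> [[U t] e]; case: (eqVneq U T) => [->|UT].
  split.
    move/gE_del/consG => [U' [t' [L E]]]; move: L; case: E => <- <- -> L.
    exists T, t; split; first by apply/C2.
    by rewrite C3 //; apply/C2.
  move=> [U' [t' [L E]]]; move: L; case: E => <- <- -> L.
  apply/gE_del; rewrite C3 //; apply/consG; exists T, (mp t); split => //; exact/C2.
split.
  move/(gE_other _ _ UT)/consG => [U' [t' [L E]]]; move: L; case: E => <- <- -> L.
  exists U, t; split; [exact/lt_other | by rewrite ev_other].
move=> [U' [t' [L E]]]; move: L; case: E => <- <- -> L.
apply/(gE_other _ _ UT); rewrite ev_other //; apply/consG; exists U, t; split=> //; exact/lt_other.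
Qed.

End Main.

Theorem lemma6 (Thread Register Location Value : finType) (Mode : Type) (rlx : Mode)
  (P : Program Thread Register Location Value Mode)
  (G : Graph Thread Location Value Mode) :
  wf_program P -> wf_graph G -> cons rlx P G -> BE rlx P G ->
  forall (T : Thread) (q tend : nat),
    fail_end rlx P G T q tend ->
    cons rlx P (del G T (tend - alen P G T tend) (alen P G T tend)).
Proof.
move=> wfP wfG consG BEG T q tend FE.
exact: (cons_del wfP wfG consG BEG FE).
Qed.
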